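(* For every $p,q\in\mathbb{N}$ with $p/q\ge2$, we have $\overline{\xi_f}(E_{p/q})=p/q$.
   Context: For $p,q\in\mathbb{N}$ with $p/q\ge2$, the fraction graph $E_{p/q}$ has vertex set $\mathbb{Z}_p=\{0,1,\dots,p-1\}$, and distinct vertices $i,j$ are adjacent iff their cyclic distance $\min(|i-j|, p-|i-j|)$ is strictly less than $q$ (the graph depends on the pair $(p,q)$). For a graph $G$, the complement of the projective rank $\overline{\xi_f}(G)$ is the infimum of $d/r$ over all $d,r\in\mathbb{N}$ for which there is an assignment of $r$-dimensional subspaces $W_v\le\mathbb{C}^d$ to the vertices $v$ of $G$ such that distinct non-adjacent vertices receive orthogonal subspaces. *)

(* Defs.v *)
From HB Require Import structures.
From mathcomp Require Import all_boot all_order all_algebra.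
From mathcomp Require Import complex.
From mathcomp Require Import Rstruct.
Set Implicit Arguments. Unset Strict Implicit. Unset Printing Implicit Defensive.
Import Order.TTheory GRing.Theory Num.Theory.
Local Open Scope ring_scope.

Definition CC : Type := (Rdefinitions.R)[i].

Definition cycdist (p i j : nat) : nat :=
  minn (if (i <= j)%N then j - i else i - j)%N (p - (if (i <= j)%N then j - i else i - j))%N.

(* Fraction graph E_{p/q} on vertex set Z_p = 'I_p:
   distinct i, j adjacent iff cyclic distance < q. *)
Definition frac_adj (p q : nat) (i j : 'I_p) : bool :=
  (i != j) && (cycdist p i j < q)%N.

Definition ctrmx (m n : nat) (A : 'M[CC]_(m, n)) : 'M[CC]_(n, m) :=
  (map_mx (fun z : CC => z^*) A)^T.

(* A d/r-representation (for the complement of projective rank) of E_{p/q}: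
   each vertex v gets an r-dimensional subspace W_v of C^d, given as the row
   space of an r x d matrix of rank r; distinct non-adjacent vertices get
   orthogonal subspaces w.r.t. the standard Hermitian inner product. *)
Definition frac_orth_rep (p q d r : nat) (W : 'I_p -> 'M[CC]_(r, d)) : Prop :=
  (forall v, \rank (W v) = r) /\
  (forall u v, u != v -> ~~ @frac_adj p q u v -> W u *m ctrmx (W v) = 0).

Definition cxif_ratios (p q : nat) (x : rat) : Prop :=
  exists (d r : nat), (0 < d)%N /\ (0 < r)%N /\ x = d%:R / r%:R /\
    exists W : 'I_p -> 'M[CC]_(r, d), @frac_orth_rep p q d r W.

Definition is_infimum (S : Rdefinitions.R -> Prop) (c : Rdefinitions.R) : Prop :=
  (forall x, S x -> c <= x) /\
  (forall c', (forall x, S x -> c' <= x) -> c' <= c).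

(* complement of projective rank of E_{p/q} equals c *)
Definition cxif_frac_eq (p q : nat) (c : Rdefinitions.R) : Prop :=
  is_infimum (fun x => exists y : rat, cxif_ratios p q y /\ x = ratr y) c.

(* Main.v *)
Require Import Defs.
From mathcomp Require Import all_boot all_order all_algebra.
From mathcomp Require Import complex Rstruct.
From mathcomp Require Import zify.
Import GRing.Theory Num.Theory.
Local Open Scope ring_scope.
Set Implicit Arguments. Unset Strict Implicit. Unset Printing Implicit Defensive.

Lemma ctrmxM (m n k : nat) (A : 'M[CC]_(m, n)) (B : 'M[CC]_(n, k)) :
  ctrmx (A *m B) = ctrmx B *m ctrmx A.
Proof. by rewrite /ctrmx map_mxM trmx_mul. Qed.

Lemma ctrmxK (m n : nat) (A : 'M[CC]_(m, n)) : ctrmx (ctrmx A) = A.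
Proof.
by apply/matrixP=> i j; rewrite /ctrmx !mxE conjCK.
Qed.

Lemma ctrmx0 (m n : nat) : ctrmx (0 : 'M[CC]_(m, n)) = 0.
Proof. by apply/matrixP=> i j; rewrite /ctrmx !mxE conjC0. Qed.

Definition orth (d m n : nat) (X : 'M[CC]_(m, d)) (Y : 'M[CC]_(n, d)) : Prop :=
  X *m ctrmx Y = 0.

Lemma orth_sym d m n (X : 'M[CC]_(m, d)) (Y : 'M[CC]_(n, d)) :
  orth X Y -> orth Y X.
Proof. by rewrite /orth => H; rewrite -[Y in Y *m _]ctrmxK -ctrmxM H ctrmx0. Qed.

Lemma orth_subl d m m' n (X : 'M[CC]_(m, d)) (X' : 'M[CC]_(m', d)) (Y : 'M[CC]_(n, d)) :
  (X' <= X)%MS -> orth X Y -> orth X' Y.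
Proof. by move=> /submxP [D ->]; rewrite /orth -mulmxA => ->; rewrite mulmx0. Qed.

Lemma orth_subr d m n n' (X : 'M[CC]_(m, d)) (Y : 'M[CC]_(n, d)) (Y' : 'M[CC]_(n', d)) :
  (Y' <= Y)%MS -> orth X Y -> orth X Y'.
Proof. by move=> s /orth_sym H; apply: orth_sym; apply: orth_subl H. Qed.

Lemma orth_addl d m n k (X : 'M[CC]_(m, d)) (Y : 'M[CC]_(n, d)) (Z : 'M[CC]_(k, d)) :
  orth X Z -> orth Y Z -> orth (X + Y)%MS Z.
Proof.
move=> HX HY; apply: (orth_subl (X:=col_mx X Y)); first by rewrite addsmxE.
by rewrite /orth mul_col_mx HX HY col_mx0.
Qed.

Lemma orth_self0 d m (Z : 'M[CC]_(m, d)) : orth Z Z -> Z = 0.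
Proof.
move=> H; apply/matrixP=> i j; rewrite mxE.
have := congr1 (fun M : 'M[CC]_(m, m) => M i i) (H : Z *m ctrmx Z = 0); rewrite !mxE => /eqP.
rewrite psumr_eq0; last by move=> k _; rewrite /ctrmx !mxE mul_conjC_ge0.
move=> /allP /(_ j (mem_index_enum _)) /implyP /(_ isT).
by rewrite /ctrmx !mxE mul_conjC_eq0 => /eqP.
Qed.

Lemma orth_rank d (X Y : 'M[CC]_d) : orth X Y -> (\rank X + \rank Y <= d)%N.
Proof.
move=> H; rewrite -mxrank_sum_cap.
have -> : (X :&: Y)%MS = 0.
  apply: orth_self0; apply: (orth_subl (X:=X)); first exact: capmxSl.
  by apply: (orth_subr (Y:=Y)) => //; exact: capmxSr.
by rewrite mxrank0 addn0 rank_leq_col.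
Qed.

Local Close Scope ring_scope.

Lemma sum_ind_le m n x G : (\sum_(m <= v < n) (x == v) * G <= G)%N.
Proof.
rewrite -big_distrl /= -[X in (_ <= X)%N]mul1n leq_mul2r; apply/orP; right.
have -> : (\sum_(m <= v < n) (x == v) = count (pred1 x) (index_iota m n))%N.
  rewrite -sum1_count [RHS]big_mkcond /=; apply: eq_bigr => v _; rewrite eq_sym; by case: eqP.
by rewrite count_uniq_mem ?iota_uniq // leq_b1.
Qed.

Lemma sum_cover (g h1 h2 : nat -> nat) m n c a :
  (forall v, (m <= v < n)%N ->
     (exists2 j, (0 < j < c)%N & h1 j = v) \/ (exists2 j, (0 < j < a)%N & h2 j = v)) ->
  (\sum_(m <= v < n) g v <= \sum_(1 <= j < c) g (h1 j) + \sum_(1 <= j < a) g (h2 j))%N.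
Proof.
move=> Hcov.
apply: (@leq_trans (\sum_(m <= v < n) (\sum_(1 <= j < c) (h1 j == v) * g v
                        + \sum_(1 <= j < a) (h2 j == v) * g v))%N).
  rewrite big_nat_cond [X in (_ <= X)%N]big_nat_cond.
  apply: leq_sum => v /andP [Hv _].
  case: (Hcov v Hv) => [[j Hj <-]|[j Hj <-]].
    apply: leq_trans (leq_addr _ _).
    by rewrite (bigD1_seq j) ?mem_index_iota ?iota_uniq //= eqxx mul1n leq_addr.
  apply: leq_trans (leq_addl _ _).
  by rewrite (bigD1_seq j) ?mem_index_iota ?iota_uniq //= eqxx mul1n leq_addr.
rewrite big_split /= leq_add //.
  rewrite (exchange_big_nat _ m n 1 c xpredT xpredT (fun v j => (h1 j == v) * g v)%N).
  apply: leq_sum => j _.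
  apply: leq_trans (sum_ind_le m n (h1 j) (g (h1 j))).
  by rewrite leq_eqVlt; apply/orP; left; apply/eqP; apply: eq_bigr => v _; case: eqP => [->|].
rewrite (exchange_big_nat _ m n 1 a xpredT xpredT (fun v j => (h2 j == v) * g v)%N).
apply: leq_sum => j _.
apply: leq_trans (sum_ind_le m n (h2 j) (g (h2 j))).
by rewrite leq_eqVlt; apply/orP; left; apply/eqP; apply: eq_bigr => v _; case: eqP => [->|].
Qed.


Lemma cycdistC p i j : cycdist p i j = cycdist p j i.
Proof. rewrite /cycdist; case: (leqP i j); case: (leqP j i); lia. Qed.

Lemma cycdist_ge p q i j : (i <= j)%N ->
  (q <= cycdist p i j)%N = (q <= j - i)%N && (q <= p - (j - i))%N.
Proof. by move=> h; rewrite /cycdist h leq_min. Qed.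

Lemma cycdist_scale p i j g : cycdist (p * g) (i * g) (j * g) = cycdist p i j * g.
Proof.
rewrite /cycdist leq_mul2r; case: (posnP g) => [->|g0]; first by rewrite !muln0.
case: (leqP i j) => h /=.
  by rewrite -mulnBl -mulnBl minnMl.
by rewrite -mulnBl -mulnBl minnMl.
Qed.


Lemma ar_up_pair p q c e i j x y r1 r2 :
  c * q = e * p + 1 -> (i < j)%N -> (e <= j - i)%N -> (j - i <= c - e)%N ->
  i * p = x * c + r1 -> j * p = y * c + r2 -> (0 < r1 < c)%N -> (0 < r2 < c)%N ->
  (q <= y - x)%N /\ (q <= p - (y - x))%N.
Proof.
move=> Hc Hij He1 He2 Hx Hy Hr1 Hr2.
have A1 : (e * p <= (j - i) * p)%N by rewrite leq_mul2r He1 orbT.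
have A2 : ((j - i) * p <= (c - e) * p)%N by rewrite leq_mul2r He2 orbT.
rewrite mulnBl in A1 A2.
split; nia.
Qed.

Lemma ar_up_zero p q c e j y r :
  c * q = e * p + 1 -> (2 <= c)%N -> (2 * q < p)%N -> (e <= j)%N -> (j <= c - e)%N ->
  j * p = y * c + r -> (r < c)%N -> (q.-1 <= y)%N /\ (y <= p - q)%N.
Proof.
move=> Hc Hc2 Hpq He1 He2 Hy Hr.
have A1 : (e * p <= j * p)%N by rewrite leq_mul2r He1 orbT.
have A2 : (j * p <= (c - e) * p)%N by rewrite leq_mul2r He2 orbT.
rewrite mulnBl in A2.
split; nia.
Qed.

Lemma ar_lo_pair p q a b i j x y r1 r2 :
  b * p = a * q + 1 -> (i < j)%N -> (b <= j - i)%N -> (j - i <= a - b)%N ->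
  i * p = x * a + r1 -> j * p = y * a + r2 -> (r1 < a)%N -> (r2 < a)%N ->
  (q <= y - x)%N /\ (q <= p - (y - x))%N.
Proof.
move=> Hc Hij He1 He2 Hx Hy Hr1 Hr2.
have A1 : (b * p <= (j - i) * p)%N by rewrite leq_mul2r He1 orbT.
have A2 : ((j - i) * p <= (a - b) * p)%N by rewrite leq_mul2r He2 orbT.
rewrite mulnBl in A1 A2.
split; nia.
Qed.

Lemma ar_lo_zero p q a b j y r :
  b * p = a * q + 1 -> (b <= j)%N -> (j <= a - b)%N ->
  j * p = y * a + r -> (r < a)%N -> (q <= y)%N /\ (y + q < p)%N.
Proof.
move=> Hc He1 He2 Hy Hr.
have A1 : (b * p <= j * p)%N by rewrite leq_mul2r He1 orbT.
have A2 : (j * p <= (a - b) * p)%N by rewrite leq_mul2r He2 orbT.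
rewrite mulnBl in A2.
split; nia.
Qed.

Lemma divn_between c m v : (0 < c)%N -> (v * c <= m)%N -> (m < v.+1 * c)%N -> m %/ c = v.
Proof.
move=> c0 h1 h2; apply/eqP; rewrite eqn_leq -ltnS ltn_divLR // h2 /=.
by rewrite leq_divRL.
Qed.

Lemma ar_cover p q c a e v :
  c * q = e * p + 1 -> a + c = p -> coprime p c -> (0 < c)%N -> (0 < a)%N ->
  (0 < v)%N -> (v.+2 <= p)%N ->
  (exists2 j, (0 < j < c)%N & j * p %/ c = v) \/ (exists2 j, (0 < j < a)%N & j * p %/ a = v).
Proof.
move=> Hc Hac Hcop c0 a0 v0 vp.
have p0 : (0 < p)%N by lia.
set m := (v * c + c - 1)%N.
have Em := divn_eq m p; have Hr := ltn_pmod m p0.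
set j1 := m %/ p in Em; set r := m %% p in Em Hr.
case: (leqP (v * c) (j1 * p)) => H.
  left; exists j1; last by apply: divn_between => //; nia.
  apply/andP; split; nia.
right.
have Hne : (j1.+1 * p != v.+1 * c)%N.
  apply/eqP => E.
  have : (p %| v.+1 * c)%N by rewrite -E dvdn_mull.
  rewrite Gauss_dvdl // => /dvdn_leq; lia.
have Hj1 : (j1 <= v)%N by nia.
exists (v - j1)%N.
  apply/andP; split; nia.
apply: divn_between => //; rewrite mulnBl; nia.
Qed.


Definition valid d p q (f : nat -> 'M[CC]_d) : Prop :=
  forall i j, (i < p)%N -> (j < p)%N -> (q <= cycdist p i j)%N -> orth (f i) (f j).

Lemma valid_intro d p q (f : nat -> 'M[CC]_d) :
  (forall i j, (i <= j)%N -> (j < p)%N -> (q <= j - i)%N -> (q <= p - (j - i))%N -> orth (f i) (f j)) ->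
  valid p q f.
Proof.
move=> H i j hi hj; case: (leqP i j) => h.
  by rewrite cycdist_ge // => /andP [h1 h2]; apply: H.
rewrite cycdistC cycdist_ge ?(ltnW h) // => /andP [h1 h2]; apply: orth_sym.
exact: H (ltnW h) hi h1 h2.
Qed.

Lemma pairwise_rank d p (f : nat -> 'M[CC]_d) :
  (forall i j, (i < j)%N -> (j < p)%N -> orth (f i) (f j)) ->
  (\sum_(0 <= i < p) \rank (f i) <= d)%N.
Proof.
move=> H.
have: forall n, (n <= p)%N -> exists S : 'M[CC]_d,
   \rank S = (\sum_(0 <= i < n) \rank (f i))%N /\ forall j, (n <= j < p)%N -> orth S (f j).
  elim=> [|n IH] hn.
    exists (0 : 'M[CC]_d)%R; rewrite mxrank0 big_geq //; split => // j _; by rewrite /orth mul0mx.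
  have [S [HS HO]] := IH (ltnW hn).
  exists (S + f n)%MS; split.
    have Hcap : (S :&: f n)%MS = 0%R.
      apply: orth_self0; apply: (orth_subl (X:=S)); first exact: capmxSl.
      apply: (orth_subr (Y:=f n)); first exact: capmxSr.
      by apply: HO; rewrite leqnn hn.
    have := mxrank_sum_cap S (f n); rewrite Hcap mxrank0 addn0 => ->.
    by rewrite big_nat_recr //= HS.
  move=> j /andP [h1 h2]; apply: orth_addl; first by apply: HO; rewrite h2 ltnW.
  exact: H.
move=> /(_ p (leqnn p)) [S [<- _]]; exact: rank_leq_col.
Qed.

Lemma main_bound d q : forall p (f : nat -> 'M[CC]_d),
  (0 < q)%N -> (2 * q <= p)%N -> coprime p q -> valid p q f ->
  (\sum_(0 <= i < p) \rank (f i) <= q * d)%N.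
Proof.
elim/ltn_ind: q => q IH p f q0 Hpq Hcop Hv.
case: (ltngtP q 1) => Hq1; first (clear -q0 Hq1; lia); last first.
  rewrite Hq1 mul1n; apply: pairwise_rank => i j hij hjp; apply: Hv.
  - exact: ltn_trans hij hjp.
  - exact: hjp.
  - rewrite cycdist_ge; last exact: ltnW.
    by apply/andP; split; clear -hij hjp Hq1; lia.
have [e He Hd] := Bezoutl p q0.
have g1 : gcdn q p = 1%N by rewrite gcdnC; apply/eqP.
rewrite g1 in Hd.
have e0 : (0 < e)%N.
  case: (posnP e) Hd => [-> |//]; rewrite mul0n addn0 dvdn1 => /eqP; clear -Hq1; lia.
have Hpq' : (2 * q < p)%N.
  rewrite ltn_neqAle Hpq andbT; apply/eqP => E; move: Hcop; rewrite -E /coprime => /eqP Hg.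
  have : (q %| gcdn (2 * q) q)%N by rewrite dvdn_gcd dvdn_mull // dvdnn.
  by rewrite Hg dvdn1 => /eqP; clear -Hq1; lia.
set c := ((1 + e * p) %/ q)%N.
have Hc : (c * q = e * p + 1)%N by rewrite /c divnK // addnC.
have cp : (c < p)%N by clear -Hc He Hpq' q0; nia.
have c2e : (2 * e < c)%N by clear -Hc He Hpq' q0; nia.
have c0 : (0 < c)%N by clear -c2e; lia.
set a := (p - c)%N; set b := (q - e)%N.
have Hab : (b * p = a * q + 1)%N.
  rewrite /a /b !mulnBl; clear -Hc cp He; nia.
have a2b : (2 * b <= a)%N by clear -Hab Hpq' He q0; nia.
have b0 : (0 < b)%N by clear -He; lia.
have a0 : (0 < a)%N by clear -cp; lia.
have cop_ce : coprime c e.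
  rewrite /coprime -dvdn1 -(dvdn_addr 1 (dvdn_mulr p (dvdn_gcdr c e))) -Hc.
  exact: dvdn_mulr (dvdn_gcdl c e).
have cop_ab : coprime a b.
  rewrite /coprime -dvdn1 -(dvdn_addr 1 (dvdn_mulr q (dvdn_gcdl a b))) -Hab.
  exact: dvdn_mulr (dvdn_gcdr a b).
have cop_pc : coprime p c.
  rewrite /coprime -dvdn1 -(dvdn_addr 1 (dvdn_mull e (dvdn_gcdl p c))) -Hc.
  exact: dvdn_mulr (dvdn_gcdr p c).
have p0 : (0 < p)%N by clear -cp; lia.
have nz : forall k, (0 < k < c)%N -> (0 < k * p %% c)%N.
  move=> k /andP [k0 kc]; rewrite lt0n; apply/negP => H.
  have : (c %| k * p)%N by [].
  rewrite Gauss_dvdl; last by rewrite coprime_sym.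
  by move=> /(dvdn_leq k0); clear -kc; lia.
set A := (f p.-1 :&: f 0)%MS; set B := (f p.-1 + f 0)%MS.
pose Fu := fun j => if j == 0%N then A else f (j * p %/ c).
pose Fl := fun j => if j == 0%N then B else f (j * p %/ a).
have Vu : valid c e Fu.
  apply: valid_intro => i j hij hjc h1 h2.
  case: (posnP i) => [i0 | i0].
    subst i; rewrite subn0 in h1 h2.
    have j0 : (0 < j)%N by clear -h1 e0; lia.
    rewrite /Fu eqxx (negbTE (lt0n_neq0 j0)).
    have hje : (j <= c - e)%N by clear -h2 hjc; lia.
    have c2 : (2 <= c)%N by clear -c2e e0; lia.
    have [hy1 hy2] := ar_up_zero Hc c2 Hpq' h1 hje (divn_eq (j * p) c) (ltn_pmod _ c0).
    move: hy1 hy2; set y := (j * p %/ c)%N => hy1 hy2.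
    have hyp : (y < p)%N by clear -hy2 q0 Hpq'; lia.
    case: (leqP q y) => hq.
      apply: (orth_subl (X := f 0)); first exact: capmxSr.
      apply: Hv => //; rewrite cycdist_ge // subn0; apply/andP; split => //.
      by clear -hy2 Hpq'; lia.
    apply: (orth_subl (X := f p.-1)); first exact: capmxSl.
    apply: Hv => //; first by clear -p0; lia.
    rewrite cycdistC cycdist_ge; last by clear -hyp; lia.
    by apply/andP; split; clear -hy1 hq Hpq' q0; lia.
  have j0 : (0 < j)%N by clear -i0 hij; lia.
  rewrite /Fu (negbTE (lt0n_neq0 i0)) (negbTE (lt0n_neq0 j0)).
  have hij' : (i < j)%N by clear -h1 e0; lia.
  have h2' : (j - i <= c - e)%N by clear -h2 hjc; lia.
  have r1 : (0 < (i * p) %% c < c)%N by rewrite nz ?ltn_pmod //; apply/andP; split; clear -i0 hij hjc; lia.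
  have r2 : (0 < (j * p) %% c < c)%N by rewrite nz ?ltn_pmod //; apply/andP; split; clear -j0 hjc; lia.
  have [hxy1 hxy2] := ar_up_pair Hc hij' h1 h2' (divn_eq (i * p) c) (divn_eq (j * p) c) r1 r2.
  have hxy : (i * p %/ c <= j * p %/ c)%N by apply: leq_div2r; rewrite leq_mul2r hij orbT.
  have hyp : (j * p %/ c < p)%N by rewrite ltn_divLR //; clear -hjc p0; nia.
  apply: Hv; [exact: leq_ltn_trans hxy hyp | exact: hyp |].
  by rewrite cycdist_ge //; apply/andP; split.
have Vl : valid a b Fl.
  apply: valid_intro => i j hij hja h1 h2.
  case: (posnP i) => [i0 | i0].
    subst i; rewrite subn0 in h1 h2.
    have j0 : (0 < j)%N by clear -h1 b0; lia.
    rewrite /Fl eqxx (negbTE (lt0n_neq0 j0)).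
    have hjb : (j <= a - b)%N by clear -h2 hja; lia.
    have [hy1 hy2] := ar_lo_zero Hab h1 hjb (divn_eq (j * p) a) (ltn_pmod _ a0).
    move: hy1 hy2; set y := (j * p %/ a)%N => hy1 hy2.
    have hyp : (y < p)%N by clear -hy2; lia.
    apply: orth_addl.
      apply: Hv => //; first by clear -p0; lia.
      rewrite cycdistC cycdist_ge; last by clear -hyp; lia.
      by apply/andP; split; clear -hy1 hy2 q0; lia.
    apply: Hv => //; rewrite cycdist_ge // subn0; apply/andP; split => //.
    by clear -hy2; lia.
  have j0 : (0 < j)%N by clear -i0 hij; lia.
  rewrite /Fl (negbTE (lt0n_neq0 i0)) (negbTE (lt0n_neq0 j0)).
  have hij' : (i < j)%N by clear -h1 b0; lia.
  have h2' : (j - i <= a - b)%N by clear -h2 hja; lia.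
  have [hxy1 hxy2] := ar_lo_pair Hab hij' h1 h2' (divn_eq (i * p) a) (divn_eq (j * p) a)
     (ltn_pmod _ a0) (ltn_pmod _ a0).
  have hxy : (i * p %/ a <= j * p %/ a)%N by apply: leq_div2r; rewrite leq_mul2r hij orbT.
  have hyp : (j * p %/ a < p)%N by rewrite ltn_divLR //; clear -hja p0; nia.
  apply: Hv; [exact: leq_ltn_trans hxy hyp | exact: hyp |].
  by rewrite cycdist_ge //; apply/andP; split.
have IHu := IH e He c Fu e0 (ltnW c2e) cop_ce Vu.
have bq : (b < q)%N by clear -e0 He; lia.
have IHl := IH b bq a Fl b0 a2b cop_ab Vl.
have Eu : (\sum_(0 <= j < c) \rank (Fu j) = \rank A + \sum_(1 <= j < c) \rank (f (j * p %/ c)))%N.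
  rewrite big_ltn // {1}/Fu eqxx; congr addn.
  by apply: eq_big_nat => j /andP [j1 _]; rewrite /Fu (negbTE (lt0n_neq0 j1)).
have El : (\sum_(0 <= j < a) \rank (Fl j) = \rank B + \sum_(1 <= j < a) \rank (f (j * p %/ a)))%N.
  rewrite big_ltn // {1}/Fl eqxx; congr addn.
  by apply: eq_big_nat => j /andP [j1 _]; rewrite /Fl (negbTE (lt0n_neq0 j1)).
have EAB : (\rank A + \rank B = \rank (f p.-1) + \rank (f 0))%N.
  by rewrite addnC mxrank_sum_cap.
have Ef : (\sum_(0 <= i < p) \rank (f i) =
    \rank (f 0) + \sum_(1 <= i < p.-1) \rank (f i) + \rank (f p.-1))%N.
  rewrite big_ltn // -addnA; congr addn.
  by rewrite -{1}(prednK p0) big_nat_recr //=; clear -Hpq' q0; lia.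
have Hcov := sum_cover (fun v => \rank (f v)) (h1 := fun j => j * p %/ c) (h2 := fun j => j * p %/ a)
   (m := 1) (n := p.-1) (c := c) (a := a).
have Hcov' : (\sum_(1 <= i < p.-1) \rank (f i) <=
   \sum_(1 <= j < c) \rank (f (j * p %/ c)) + \sum_(1 <= j < a) \rank (f (j * p %/ a)))%N.
  apply: Hcov => v /andP [v1 v2].
  apply: (ar_cover (q := q) (e := e)) => //; first by rewrite /a subnK // ltnW.
  by clear -v2; lia.
have Eq : (q * d = e * d + b * d)%N by rewrite /b -mulnDl subnKC // ltnW.
rewrite Ef Eq.
clear -IHu IHl Eu El EAB Hcov'; lia.
Qed.


Lemma lower_nat p q d r (W : 'I_p -> 'M[CC]_(r, d)) :
  (0 < q)%N -> (2 * q <= p)%N -> @frac_orth_rep p q d r W -> (p * r <= q * d)%N.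
Proof.
case: p W => [|p0] W q0 Hpq [Hr Ho]; first by clear -q0 Hpq; lia.
set p := p0.+1 in W Hpq Hr Ho *.
set g := gcdn p q.
have g0 : (0 < g)%N by rewrite gcdn_gt0 q0 orbT.
set p' := (p %/ g)%N; set q' := (q %/ g)%N.
have Ep : p = (p' * g)%N by rewrite /p' divnK // dvdn_gcdl.
have Eq : q = (q' * g)%N by rewrite /q' divnK // dvdn_gcdr.
have q'0 : (0 < q')%N by move: q0; rewrite Eq muln_gt0 => /andP [].
have Hpq' : (2 * q' <= p')%N by move: Hpq; rewrite Ep Eq mulnA leq_mul2r => /orP [/eqP g00|//]; move: g0; rewrite g00.
have cop : coprime p' q'.
  rewrite /coprime; apply/eqP.
  have : (gcdn p' q' * g = 1 * g)%N by rewrite muln_gcdl -Ep -Eq mul1n.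
  by move/eqP; rewrite eqn_pmul2r // => /eqP.
pose f := fun i : nat => (<<W (inord (i * g))>>)%MS.
have Hv : valid p' q' f.
  move=> i j hi hj hc.
  have hi' : (i * g < p)%N by rewrite Ep ltn_pmul2r.
  have hj' : (j * g < p)%N by rewrite Ep ltn_pmul2r.
  have hc' : (q <= cycdist p (i * g) (j * g))%N by rewrite Ep Eq cycdist_scale leq_mul2r hc orbT.
  have Hne : (inord (i * g) : 'I_p) != inord (j * g).
    apply/negP => /eqP /(congr1 val); rewrite /= !inordK // => E.
    by move: hc'; rewrite E /cycdist leqnn subnn /= min0n; clear -q0; lia.
  have Hna : ~~ @frac_adj p q (inord (i * g)) (inord (j * g)).
    by rewrite /frac_adj negb_and -leqNgt !inordK // hc' orbT.
  have := Ho _ _ Hne Hna => H.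
  apply: (orth_subl (X := W (inord (i * g)))); first by rewrite genmxE.
  apply: (orth_subr (Y := W (inord (j * g)))); first by rewrite genmxE.
  exact: H.
have := main_bound q'0 Hpq' cop Hv.
have -> : (\sum_(0 <= i < p') \rank (f i) = p' * r)%N.
  rewrite (eq_big_nat _ _ (F2 := fun _ => r)); first by rewrite sum_nat_const_nat subn0.
  by move=> i _; rewrite /f genmxE Hr.
move=> H; rewrite Ep Eq mulnAC [(q' * g * d)%N]mulnAC leq_mul2r H orbT //.
Qed.

Lemma mod_ne p q u v k l : (u < p)%N -> (v < p)%N -> (k < q)%N -> (l < q)%N -> (2 * q <= p)%N ->
  (q <= cycdist p u v)%N -> (u + k) %% p != (v + l) %% p.
Proof.
move=> hu hv hk hl hpq.
wlog huv : u v k l hu hv hk hl / (u <= v)%N.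
  move=> W; case: (leqP u v) => h; first exact: W.
  rewrite cycdistC eq_sym; apply: W => //; exact: ltnW.
rewrite cycdist_ge // => /andP [h1 h2].
have p0 : (0 < p)%N by clear -hu; lia.
apply/negP => /eqP E.
have E1 := divn_eq (u + k) p; have E2 := divn_eq (v + l) p.
rewrite E in E1.
have a1 : ((u + k) %/ p < 2)%N by rewrite ltn_divLR //; clear -hu hk hpq; lia.
have a2 : ((v + l) %/ p < 2)%N by rewrite ltn_divLR //; clear -hv hl hpq; lia.
move: E1 E2 a1 a2; set x := ((u + k) %/ p)%N; set y := ((v + l) %/ p)%N; set r := ((v + l) %% p)%N.
move=> E1 E2 a1 a2.
case: x E1 a1 => [|[|x]] E1 a1; case: y E2 a2 => [|[|y]] E2 a2; clear -E1 E2 h1 h2 hk hl huv hu hv; lia.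
Qed.

Lemma sum_ind_CC p x (G : 'I_p -> CC) (hx : (x < p)%N) :
  (\sum_(j < p) ((nat_of_ord j == x)%:R * G j) = G (Ordinal hx))%R.
Proof.
rewrite (bigD1 (Ordinal hx)) //= eqxx mul1r big1 ?addr0 // => j hj.
have -> : (nat_of_ord j == x) = false.
  apply/negbTE; apply: contra hj => /eqP e; apply/eqP/val_inj => /=; exact: e.
by rewrite mul0r.
Qed.

Lemma constr p q : (0 < q)%N -> (2 * q <= p)%N ->
  exists W : 'I_p -> 'M[CC]_(q, p), @frac_orth_rep p q p q W.
Proof.
move=> q0 hpq.
have p0 : (0 < p)%N by clear -q0 hpq; lia.
pose W := fun i : 'I_p => (\matrix_(k < q, j < p) ((nat_of_ord j == (i + k) %% p)%N%:R : CC))%R.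
have entry : forall (u v : 'I_p) (k l : 'I_q),
   ((W u *m ctrmx (W v)) k l = (((u + k) %% p == (v + l) %% p)%N)%:R)%R.
  move=> u v k l; rewrite !mxE.
  under eq_bigr => j _ do rewrite /ctrmx !mxE conjC_nat.
  rewrite (sum_ind_CC _ (ltn_pmod (u + k) p0)) /=.
  by rewrite eq_sym.
exists W; split.
  move=> v; apply/eqP; rewrite eqn_leq rank_leq_row /=.
  have HW : (W v *m ctrmx (W v) = 1%:M)%R.
    apply/matrixP => k l; rewrite entry !mxE.
    congr (_ %:R)%R.
    have hk : (k < p)%N by clear -hpq; have := ltn_ord k; lia.
    have hl : (l < p)%N by clear -hpq; have := ltn_ord l; lia.
    by rewrite eqn_modDl !modn_small.
  by apply: leq_trans (mxrankM_maxl _ (ctrmx (W v))); rewrite HW mxrank1.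
move=> u v huv hadj; apply/matrixP => k l; rewrite entry !mxE.
have hc : (q <= cycdist p u v)%N.
  by move: hadj; rewrite /frac_adj huv /= -leqNgt.
by rewrite (negbTE (mod_ne (ltn_ord u) (ltn_ord v) (ltn_ord k) (ltn_ord l) hpq hc)).
Qed.


Local Open Scope ring_scope.
Unset Implicit Arguments.

Theorem lemma13 (p q : nat) (hq : (0 < q)%N) (hpq : (2 * q <= p)%N) :
  cxif_frac_eq p q ((p%:R : Rdefinitions.R) / q%:R).
Proof.
split.
  move=> x [y [[d [r [d0 [r0 [-> [W HW]]]]]] ->]].
  have H := lower_nat hq hpq HW.
  rewrite fmorph_div /= !ratr_nat.
  rewrite ler_pdivrMr ?ltr0n // mulrAC ler_pdivlMr ?ltr0n // -!natrM ler_nat.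
  by rewrite [(d * q)%N]mulnC.
move=> c' Hc'; have [W HW] := constr hq hpq.
have -> : (p%:R / q%:R : Rdefinitions.R) = ratr (p%:R / q%:R : rat).
  by rewrite fmorph_div /= !ratr_nat.
apply: Hc'; exists (p%:R / q%:R : rat); split => //.
exists p, q; split; first by apply: leq_trans hpq; rewrite muln_gt0 hq.
by split => //; split => //; exists W.
Qed.
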